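(* Let $X$ be a finite connected rack and let $S$ be a minimal element of $\overline{\mathcal{R}(X)}$. Then $\mathcal{R}(X)$ is pure if and only if $\overline{\mathcal{R}(X)}_{\ge S}=\{T\in\overline{\mathcal{R}(X)}: T\supseteq S\}$ is pure.
   Context: A rack is a set $X$ with a binary operation $\triangleright$ such that $a\triangleright(b\triangleright c)=(a\triangleright b)\triangleright(a\triangleright c)$ for all $a,b,c$, and each map $\phi_a\colon x\mapsto a\triangleright x$ is a bijection of $X$. Subracks are subsets closed under $\triangleright$ (including $\emptyset$); $\mathcal{R}(X)$ is the lattice of subracks under inclusion and $\overline{\mathcal{R}(X)}=\mathcal{R}(X)\setminus\{X,\emptyset\}$. $\mathsf{Inn}(X)=\langle\phi_a:a\in X\rangle$, and $X$ is connected if $\mathsf{Inn}(X)$ acts transitively on $X$. A finite poset is pure if all of its maximal chains have the same length. *)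

(* Defs.v *)
From mathcomp Require Import all_boot all_fingroup.
Set Implicit Arguments. Unset Strict Implicit. Unset Printing Implicit Defensive.

Record rack (T : finType) := Rack {
  rop : T -> T -> T;
  rop_sd : forall a b c, rop a (rop b c) = rop (rop a b) (rop a c);
  rop_bij : forall a, bijective (rop a) }.

Definition phi (T : finType) (X : rack T) (a : T) : {perm T} :=
  perm (bij_inj (rop_bij X a)).

Definition Inn (T : finType) (X : rack T) : {set {perm T}} :=
  <<[set phi X a | a : T]>>%g.

Definition connected (T : finType) (X : rack T) : Prop :=
  forall x y : T, exists2 g, g \in Inn X & g x = y.

(* subracks (including the empty set) *)
Definition is_subrack (T : finType) (X : rack T) (S : {set T}) : bool :=
  [forall a in S, forall b in S, rop X a b \in S].

Definition subracks (T : finType) (X : rack T) : {set {set T}} :=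
  [set S | is_subrack X S].

Definition subracks_bar (T : finType) (X : rack T) : {set {set T}} :=
  subracks X :\: [set setT; set0].

Definition subracks_bar_ge (T : finType) (X : rack T) (S : {set T}) :=
  [set U in subracks_bar X | S \subset U].

(* Finite posets given as families of sets ordered by inclusion. *)
Definition is_chain (T : finType) (P C : {set {set T}}) : Prop :=
  C \subset P /\ (forall A B, A \in C -> B \in C -> (A \subset B) || (B \subset A)).

Definition maximal_chain (T : finType) (P C : {set {set T}}) : Prop :=
  is_chain P C /\ (forall C', is_chain P C' -> C \subset C' -> C' = C).

(* pure: all maximal chains have the same length (= cardinality - 1) *)
Definition pure (T : finType) (P : {set {set T}}) : Prop :=
  forall C1 C2, maximal_chain P C1 -> maximal_chain P C2 -> #|C1| = #|C2|.

Definition minimal_in (T : finType) (P : {set {set T}}) (S : {set T}) : Prop :=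
  S \in P /\ (forall U, U \in P -> U \subset S -> U = S).

(* Main.v *)
Require Import Defs.
From mathcomp Require Import all_boot all_fingroup.
Set Implicit Arguments. Unset Strict Implicit. Unset Printing Implicit Defensive.

Definition autset (T : finType) (X : rack T) : {set {perm T}} :=
  [set g : {perm T} | [forall a, forall b, g (rop X a b) == rop X (g a) (g b)]].

Lemma autsetP (T : finType) (X : rack T) (g : {perm T}) :
  reflect (forall a b, g (rop X a b) = rop X (g a) (g b)) (g \in autset X).
Proof.
rewrite inE; apply: (iffP forallP) => [H a b|H a].
  exact/eqP/(forallP (H a) b).
by apply/forallP => b; apply/eqP.
Qed.

Lemma autset_group (T : finType) (X : rack T) : group_set (autset X).
Proof.
apply/group_setP; split.
  by apply/autsetP => a b; rewrite !perm1.
move=> g h /autsetP Hg /autsetP Hh; apply/autsetP => a b.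
by rewrite !permM Hg Hh.
Qed.

Canonical autG (T : finType) (X : rack T) := Group (autset_group X).

Lemma Inn_aut (T : finType) (X : rack T) : Inn X \subset autG X.
Proof.
rewrite /Inn gen_subG; apply/subsetP => _ /imsetP [a _ ->].
apply/autsetP => b c; rewrite !permE /=; exact: rop_sd.
Qed.

Lemma imK (T : finType) (g : {perm T}) (B : {set T}) : (g^-1)%g @: (g @: B) = B.
Proof.
rewrite -imset_comp -[RHS]imset_id; apply: eq_imset => x /=; exact: permK.
Qed.

Lemma imKV (T : finType) (g : {perm T}) (B : {set T}) : g @: ((g^-1)%g @: B) = B.
Proof.
rewrite -imset_comp -[RHS]imset_id; apply: eq_imset => x /=; exact: permKV.
Qed.

Lemma subrack_im (T : finType) (X : rack T) (g : {perm T}) (B : {set T}) :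
  g \in autG X -> is_subrack X B -> is_subrack X (g @: B).
Proof.
move=> /autsetP Hg /forall_inP HB; apply/forall_inP => _ /imsetP [a aB ->].
apply/forall_inP => _ /imsetP [b bB ->].
rewrite -Hg; apply: imset_f; exact: (forall_inP (HB a aB) b bB).
Qed.

Lemma subracks_im (T : finType) (X : rack T) (g : {perm T}) (B : {set T}) :
  g \in autG X -> (g @: B \in subracks X) = (B \in subracks X).
Proof.
move=> gA; rewrite !inE; apply/idP/idP; last exact: subrack_im.
move=> H; rewrite -(imK g B); apply: subrack_im => //; by rewrite groupV.
Qed.

Lemma im_setT (T : finType) (g : {perm T}) (B : {set T}) :
  (g @: B == setT) = (B == setT).
Proof. by rewrite !eqEcard !subsetT card_imset //; exact: perm_inj. Qed.

Lemma im_set0 (T : finType) (g : {perm T}) (B : {set T}) :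
  (g @: B == set0) = (B == set0).
Proof. by rewrite -!cards_eq0 card_imset //; exact: perm_inj. Qed.

Lemma bar_im (T : finType) (X : rack T) (g : {perm T}) (B : {set T}) :
  g \in autG X -> (g @: B \in subracks_bar X) = (B \in subracks_bar X).
Proof. by move=> gA; rewrite !in_setD !in_set2 im_setT im_set0 subracks_im. Qed.

Lemma subset_im (T : finType) (g : {perm T}) (A B : {set T}) :
  (g @: A \subset g @: B) = (A \subset B).
Proof.
apply/idP/idP; last exact: imsetS.
by move=> H; rewrite -(imK g A) -(imK g B); apply: imsetS.
Qed.

Definition imF (T : finType) (g : {perm T}) (C : {set {set T}}) : {set {set T}} :=
  [set g @: B | B : {set T} in C].

Lemma imFK (T : finType) (g : {perm T}) C : imF (g^-1)%g (imF g C) = C.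
Proof.
rewrite /imF -imset_comp -[RHS]imset_id; apply: eq_imset => B /=; exact: imK.
Qed.

Lemma imFKV (T : finType) (g : {perm T}) C : imF g (imF (g^-1)%g C) = C.
Proof.
rewrite /imF -imset_comp -[RHS]imset_id; apply: eq_imset => B /=; exact: imKV.
Qed.

Lemma card_imF (T : finType) (g : {perm T}) C : #|imF g C| = #|C|.
Proof. apply: card_imset => A B E; by rewrite -(imK g A) E imK. Qed.

Lemma chain_im (T : finType) (X : rack T) (g : {perm T}) C :
  g \in autG X -> is_chain (subracks X) C -> is_chain (subracks X) (imF g C).
Proof.
move=> gA [sub cmp]; split.
  by apply/subsetP => _ /imsetP [B BC ->]; rewrite subracks_im //; exact: (subsetP sub).
move=> _ _ /imsetP [A AC ->] /imsetP [B BC ->]; rewrite !subset_im; exact: cmp.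
Qed.

Lemma maxchain_im (T : finType) (X : rack T) (g : {perm T}) C :
  g \in autG X -> maximal_chain (subracks X) C -> maximal_chain (subracks X) (imF g C).
Proof.
move=> gA [ch mx]; split; first exact: chain_im.
move=> C' ch' sub.
have gA' : (g^-1)%g \in autG X by rewrite groupV.
have := mx (imF (g^-1)%g C') (chain_im gA' ch').
rewrite -{1}(imFK g C) => /(_ (imsetS _ sub)) <-.
by rewrite imFKV.
Qed.

Definition TB (T : finType) : {set {set T}} := [set setT; set0].

Lemma setT_sub (T : finType) (X : rack T) : setT \in subracks X.
Proof. by rewrite inE; apply/forall_inP => a _; apply/forall_inP => b _; rewrite inE. Qed.

Lemma set0_sub (T : finType) (X : rack T) : set0 \in subracks X.
Proof. by rewrite inE; apply/forall_inP => a; rewrite inE. Qed.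

Lemma TB_cmp (T : finType) (A B : {set T}) : B \in TB T -> (A \subset B) || (B \subset A).
Proof. by rewrite in_set2 => /orP [] /eqP ->; rewrite ?subsetT ?sub0set ?orbT. Qed.

Lemma TB_sub (T : finType) (X : rack T) : TB T \subset subracks X.
Proof. by apply/subsetP => B; rewrite in_set2 => /orP [] /eqP ->; rewrite ?setT_sub ?set0_sub. Qed.

Lemma Q_notTB (T : finType) (X : rack T) S B :
  B \in subracks_bar_ge X S -> B \notin TB T.
Proof. by rewrite !inE => /andP [/andP [H _] _]. Qed.

Lemma Q_P (T : finType) (X : rack T) S B :
  B \in subracks_bar_ge X S -> B \in subracks X.
Proof. by rewrite inE in_setD => /andP [/andP [_ H] _]. Qed.

Lemma chainQ (T : finType) (X : rack T) S C :
  minimal_in (subracks_bar X) S -> is_chain (subracks X) C -> S \in C ->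
  is_chain (subracks_bar_ge X S) (C :\: TB T).
Proof.
move=> [Sb Smin] [sub cmp] SC; split; last first.
  by move=> A B /setDP [AC _] /setDP [BC _]; exact: cmp.
apply/subsetP => B /setDP [BC BTB].
have Bb : B \in subracks_bar X by rewrite in_setD BTB (subsetP sub).
rewrite inE Bb /=.
case/orP: (cmp _ _ SC BC) => // BS.
by rewrite (Smin B Bb BS).
Qed.

Lemma chainP (T : finType) (X : rack T) S D :
  is_chain (subracks_bar_ge X S) D -> is_chain (subracks X) (D :|: TB T).
Proof.
move=> [sub cmp]; split.
  rewrite subUset TB_sub andbT; apply/subsetP => B BD; exact: Q_P (subsetP sub _ BD).
move=> A B /setUP [AD|AT] /setUP [BD|BT]; first exact: cmp.
- exact: TB_cmp.
- by rewrite orbC; exact: TB_cmp.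
- exact: TB_cmp.
Qed.

Lemma maxQ_S (T : finType) (X : rack T) S D :
  minimal_in (subracks_bar X) S -> maximal_chain (subracks_bar_ge X S) D -> S \in D.
Proof.
move=> [Sb _] [[sub cmp] mx].
have SQ : S \in subracks_bar_ge X S by rewrite inE Sb subxx.
have ch : is_chain (subracks_bar_ge X S) (S |: D).
  split; first by rewrite subUset sub1set SQ.
  have SU : forall B, B \in S |: D -> S \subset B.
    move=> B /setU1P [->|BD]; first exact: subxx.
    by have := subsetP sub _ BD; rewrite inE => /andP [].
  move=> A B /setU1P [->|AD] /setU1P [->|BD]; rewrite ?SU ?setU11 ?orbT ?setU1r //.
  exact: cmp.
by rewrite -(mx _ ch (subsetUr _ _)) setU11.
Qed.

Lemma max_TB (T : finType) (X : rack T) C :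
  maximal_chain (subracks X) C -> TB T \subset C.
Proof.
move=> [[sub cmp] mx].
have ch : is_chain (subracks X) (C :|: TB T).
  split; first by rewrite subUset sub TB_sub.
  move=> A B /setUP [AD|AT] /setUP [BD|BT]; first exact: cmp.
  - exact: TB_cmp.
  - by rewrite orbC; exact: TB_cmp.
  - exact: TB_cmp.
by rewrite -(mx _ ch (subsetUl _ _)) subsetUr.
Qed.

Lemma A2 (T : finType) (X : rack T) S C :
  minimal_in (subracks_bar X) S -> maximal_chain (subracks X) C -> S \in C ->
  maximal_chain (subracks_bar_ge X S) (C :\: TB T).
Proof.
move=> Smin [ch mx] SC; split; first exact: chainQ.
move=> D' ch' sub.
have e := mx _ (chainP ch').
have sC : C \subset D' :|: TB T.
  apply/subsetP => B BC; case: (boolP (B \in TB T)) => BT; first by rewrite inE BT orbT.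
  by rewrite inE (subsetP sub) //; apply/setDP.
have {}e := e sC.
apply/eqP; rewrite eqEsubset sub andbT; apply/subsetP => B BD.
apply/setDP; split; first by rewrite -e inE BD.
exact: Q_notTB (subsetP ch'.1 _ BD).
Qed.

Lemma A3 (T : finType) (X : rack T) S D :
  minimal_in (subracks_bar X) S -> maximal_chain (subracks_bar_ge X S) D ->
  maximal_chain (subracks X) (D :|: TB T).
Proof.
move=> Smin mD; have SD := maxQ_S Smin mD; case: mD => [ch mx].
split; first exact: (chainP ch).
move=> C' ch' sub.
have SC' : S \in C' by apply: (subsetP sub); rewrite inE SD.
have chQ := chainQ Smin ch' SC'.
have sD : D \subset C' :\: TB T.
  apply/subsetP => B BD; apply/setDP; split; first by apply: (subsetP sub); rewrite inE BD.
  exact: Q_notTB (subsetP ch.1 _ BD).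
have e := mx _ chQ sD.
apply/eqP; rewrite eqEsubset sub andbT; apply/subsetP => B BC.
case: (boolP (B \in TB T)) => BT; first by rewrite inE BT orbT.
by rewrite inE -e; apply/orP; left; apply/setDP.
Qed.

Lemma card_TBU (T : finType) (X : rack T) S (D : {set {set T}}) :
  minimal_in (subracks_bar X) S -> D \subset subracks_bar_ge X S ->
  #|D :|: TB T| = #|D| + 2.
Proof.
move=> [Sb _] sub.
have neq : (setT : {set T}) != set0.
  apply/negP => /eqP e; move: Sb; rewrite !inE.
  have -> : S == set0 by rewrite -subset0 -e subsetT.
  by rewrite orbT.
rewrite cardsU /TB cards2 neq.
have -> : D :&: [set setT; set0] = set0.
  apply/setP => B; rewrite !inE; apply/negP => /andP [BD BT].
  by move: (Q_notTB (subsetP sub _ BD)); rewrite /TB in_set2 BT.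
by rewrite cards0 subn0 addn2.
Qed.

Lemma chain_add (T : finType) (P C : {set {set T}}) U :
  U \in P -> is_chain P C -> (forall B, B \in C -> (U \subset B) || (B \subset U)) ->
  is_chain P (U |: C).
Proof.
move=> UP [sub cmp] H; split; first by rewrite subUset sub1set UP.
move=> A B /setU1P [->|AC] /setU1P [->|BC]; rewrite ?subxx //; first exact: H.
  by rewrite orbC; exact: H.
exact: cmp.
Qed.

Lemma bar_TB (T : finType) (X : rack T) B :
  B \in subracks X -> B \notin subracks_bar X -> B \in TB T.
Proof. by rewrite in_setD => -> ; rewrite andbT negbK. Qed.

Lemma M (T : finType) (X : rack T) S C :
  S \in subracks_bar X -> maximal_chain (subracks X) C ->
  exists2 A, A \in C & minimal_in (subracks_bar X) A.
Proof.
move=> Sb [[sub cmp] mx].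
have ex : exists B, (B \in C) && (B \in subracks_bar X).
  case: (boolP [exists B, (B \in C) && (B \in subracks_bar X)]) => [/existsP//|/existsPn H].
  have SP : S \in subracks X by move: Sb; rewrite in_setD => /andP [].
  have allTB : forall B, B \in C -> B \in TB T.
    move=> B BC; apply: bar_TB; first exact: (subsetP sub).
    by have := H B; rewrite BC.
  have ch : is_chain (subracks X) (S |: C).
    apply: chain_add => // B BC; exact: TB_cmp (allTB B BC).
  have := H S; rewrite Sb andbT -(mx _ ch (subsetUr _ _)).
  by rewrite setU11.
have [A /minsetP [/andP [AC Ab] Amin]] := ex_minset ex.
exists A => //; split => // U Ub UA.
have UP : U \in subracks X by move: Ub; rewrite in_setD => /andP [].
have ch : is_chain (subracks X) (U |: C).
  apply: chain_add => // B BC.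
  case/orP: (cmp _ _ AC BC) => [AB|BA]; first by rewrite (subset_trans UA AB).
  case: (boolP (B \in subracks_bar X)) => Bb.
    by rewrite (Amin B) ?BC ?Bb // UA.
  exact: TB_cmp (bar_TB (subsetP sub _ BC) Bb).
have UC : U \in C by rewrite -(mx _ ch (subsetUr _ _)) setU11.
by apply: Amin => //; rewrite UC Ub.
Qed.

Lemma subrackI (T : finType) (X : rack T) A B :
  is_subrack X A -> is_subrack X B -> is_subrack X (A :&: B).
Proof.
move=> /forall_inP HA /forall_inP HB; apply/forall_inP => a /setIP [aA aB].
apply/forall_inP => b /setIP [bA bB]; apply/setIP; split.
  exact: (forall_inP (HA a aA) b bA).
exact: (forall_inP (HB a aB) b bB).
Qed.

Lemma N (T : finType) (X : rack T) S A :
  connected X -> minimal_in (subracks_bar X) S -> minimal_in (subracks_bar X) A ->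
  exists2 g, g \in autG X & A = g @: S.
Proof.
move=> conn [Sb Smin] [Ab Amin].
have ne : forall B, B \in subracks_bar X -> exists x, x \in B.
  move=> B; rewrite !inE => /andP [/norP [_ /set0Pn [x xB]] _]; by exists x.
have [x xS] := ne S Sb; have [y yA] := ne A Ab.
have [g gI gxy] := conn x y.
have gA : g \in autG X by exact: (subsetP (Inn_aut X)).
exists g => //.
have gSb : g @: S \in subracks_bar X by rewrite bar_im.
have gSmin : forall U, U \in subracks_bar X -> U \subset g @: S -> U = g @: S.
  move=> U Ub UgS.
  have gA' : (g^-1)%g \in autG X by rewrite groupV.
  have e : (g^-1)%g @: U = S.
    apply: Smin; first by rewrite bar_im.
    by rewrite -(imK g S); apply: imsetS.
  by rewrite -e imKV.
have yI : y \in A :&: g @: S by rewrite inE yA -gxy imset_f.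
have Ib : A :&: g @: S \in subracks_bar X.
  move: Ab gSb; rewrite !in_setD !in_set2 !inE => /andP [/norP [AT A0] AP] /andP [_ gP].
  rewrite subrackI // andbT; apply/norP; split.
    apply/negP => /eqP e; move/negP: AT; apply; rewrite eqEsubset subsetT /= -e.
    exact: subsetIl.
  by apply/set0Pn; exists y.
by rewrite -(Amin _ Ib (subsetIl _ _)) (gSmin _ Ib (subsetIr _ _)).
Qed.

Lemma K (T : finType) (X : rack T) S C :
  connected X -> minimal_in (subracks_bar X) S -> maximal_chain (subracks X) C ->
  exists2 D, maximal_chain (subracks_bar_ge X S) D & #|C| = #|D| + 2.
Proof.
move=> conn Smin mC.
have [A AC Amin] := M Smin.1 mC.
have [g gA eA] := N conn Smin Amin.
have gA' : (g^-1)%g \in autG X by rewrite groupV.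
have mC' := maxchain_im gA' mC.
have SC' : S \in imF (g^-1)%g C by rewrite -(imK g S) -eA; apply: imset_f.
have mD := A2 Smin mC' SC'.
exists (imF (g^-1)%g C :\: TB T) => //.
rewrite -(card_imF (g^-1)%g C) -(card_TBU Smin mD.1.1).
congr #|_|; by rewrite -{1}(setID (imF (g^-1)%g C) (TB T)) (setIidPr (max_TB mC')) setUC.
Qed.

Theorem mainTheorem6 (T : finType) (X : rack T) (S : {set T}) :
  connected X ->
  minimal_in (subracks_bar X) S ->
  (pure (subracks X) <-> pure (subracks_bar_ge X S)).
Proof.
move=> conn Smin; split.
  move=> pP D1 D2 m1 m2.
  have := pP _ _ (A3 Smin m1) (A3 Smin m2).
  rewrite (card_TBU Smin m1.1.1) (card_TBU Smin m2.1.1).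
  by move/eqP; rewrite eqn_add2r => /eqP.
move=> pQ C1 C2 m1 m2.
have [D1 mD1 ->] := K conn Smin m1.
have [D2 mD2 ->] := K conn Smin m2.
by rewrite (pQ _ _ mD1 mD2).
Qed.
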